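(* Let $r$ be an even integer and $s$ any integer. Then $$\sum_{k=1}^\infty\frac{L_{2rk+s}}{L_r^{2k}(2k-1)(2k)(2k+1)}=\frac14F_s\sqrt5\ln\!\Big(\frac{\beta^rL_r+1}{\alpha^rL_r+1}\Big)+\frac14L_s\ln\!\Big(\frac{2L_r^2+1}{L_r^4}\Big)-\frac{L_s}{2}$$ $$+\frac18L_r^2F_s\sqrt5\ln\!\Big(\frac{L_r+\alpha^r}{L_r+\beta^r}\alpha^{2r}\Big)+\frac18L_r^2L_s\ln(2L_r^2+1)$$ $$-\frac{L_r^2-1}{8L_r}F_{r+s}\sqrt5\ln\!\Big(\frac{L_r+\alpha^r}{L_r+\beta^r}\alpha^{2r}\Big)-\frac{L_r^2-1}{8L_r}L_{r+s}\ln(2L_r^2+1),$$ and $$\sum_{k=1}^\infty\frac{F_{2rk+s}}{L_r^{2k}(2k-1)(2k)(2k+1)}=\frac14\frac{L_s}{\sqrt5}\ln\!\Big(\frac{\beta^rL_r+1}{\alpha^rL_r+1}\Big)+\frac14F_s\ln\!\Big(\frac{2L_r^2+1}{L_r^4}\Big)-\frac{F_s}{2}$$ $$+\frac18L_r^2\frac{L_s}{\sqrt5}\ln\!\Big(\frac{L_r+\alpha^r}{L_r+\beta^r}\alpha^{2r}\Big)+\frac18L_r^2F_s\ln(2L_r^2+1)$$ $$-\frac{L_r^2-1}{8L_r}\frac{L_{r+s}}{\sqrt5}\ln\!\Big(\frac{L_r+\alpha^r}{L_r+\beta^r}\alpha^{2r}\Big)-\frac{L_r^2-1}{8L_r}F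_{r+s}\ln(2L_r^2+1).$$
   Context: $F_n$ and $L_n$ are the Fibonacci and Lucas numbers for $n\in\mathbb Z$: $F_n=(\alpha^n-\beta^n)/(\alpha-\beta)$, $L_n=\alpha^n+\beta^n$, where $\alpha=(1+\sqrt5)/2$, $\beta=(1-\sqrt5)/2$. *)

(* Defs.v *)
From Stdlib Require Import Reals ZArith.
Open Scope R_scope.

Definition alpha : R := (1 + sqrt 5) / 2.
Definition beta  : R := (1 - sqrt 5) / 2.

Definition Fib (n : Z) : R := (powerRZ alpha n - powerRZ beta n) / (alpha - beta).
Definition Luc (n : Z) : R := powerRZ alpha n + powerRZ beta n.

(* Main.v *)
Require Import Defs.
From Stdlib Require Import Reals ZArith Lra Lia.
From Coquelicot Require Import Coquelicot.
Open Scope R_scope.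

Definition lc (n : nat) : R := match n with O => 0 | S m => / INR (S m) end.

Lemma CV1 : CV_radius (fun _ : nat => 1) = 1.
Proof.
  rewrite (CV_radius_finite_DAlembert _ 1).
  - now rewrite Rinv_1.
  - intros; lra.
  - lra.
  - apply is_lim_seq_ext with (fun _ => 1). intros. rewrite Rdiv_1_r, Rabs_R1; auto.
    apply is_lim_seq_const.
Qed.

Lemma CVlc : CV_radius lc = 1.
Proof.
  rewrite <- CV_radius_derive. rewrite <- CV1. apply CV_radius_ext.
  intros n. unfold PS_derive, lc. field. apply not_0_INR. lia.
Qed.

Lemma PS1 (t : R) : Rabs t < 1 -> PSeries (fun _ => 1) t = / (1 - t).
Proof.
  intros Ht. apply is_series_unique. unfold is_series.
  apply is_series_ext with (fun n => t ^ n). intros; simpl; ring.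
  now apply is_series_geom.
Qed.

Lemma lc_eq (x : R) : Rabs x < 1 -> PSeries lc x = - ln (1 - x).
Proof.
  intros Hx.
  assert (H : forall y, Rabs y < 1 -> PSeries lc y + ln (1 - y) = PSeries lc 0 + ln (1 - 0)).
  { intros y Hy.
    set (f := fun t => PSeries lc t + ln (1 - t)).
    assert (D : forall t, Rabs t < 1 -> is_derive f t zero).
    { intros t Ht. unfold f.
      assert (Ht' : -1 < t < 1) by (apply Rabs_def2 in Ht; lra).
      assert (E : plus (/ (1 - t)) (-(/ (1 - t))) = zero).
      { change (/ (1-t) + - / (1-t) = 0). ring. }
      assert (Hd : is_derive (fun t => plus (PSeries lc t) (ln (1 - t))) t (plus (/ (1 - t)) (-(/ (1 - t))))).
      apply (is_derive_plus (PSeries lc) (fun t => ln (1 - t))).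
      - assert (E2 : PSeries (PS_derive lc) t = / (1 - t)).
        { rewrite <- PS1 by auto. apply PSeries_ext. intros n. unfold PS_derive, lc. field. apply not_0_INR. lia. }
        rewrite <- E2. apply is_derive_PSeries. rewrite CVlc. simpl. auto.
      - auto_derive. lra. field. lra.
      - rewrite E in Hd. exact Hd. }
    destruct (Rlt_or_le y 0) as [Hl|Hl].
    - change (f y = f 0). apply eq_is_derive; auto.
      intros t Ht0. apply D. apply Rabs_def1; apply Rabs_def2 in Hy; lra.
    - destruct Hl as [Hl|Hl].
      + change (f y = f 0). symmetry. apply eq_is_derive; auto.
        intros t Ht0. apply D. apply Rabs_def1; apply Rabs_def2 in Hy; lra.
      + subst. auto. }
  specialize (H x Hx). rewrite PSeries_0 in H. simpl in H.
  rewrite Rminus_0_r, ln_1 in H. lra.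
Qed.

Lemma L1 (x : R) : Rabs x < 1 ->
  is_series (fun n : nat => x ^ (S n) / INR (S n)) (- ln (1 - x)).
Proof.
  intros Hx.
  assert (HP : is_pseries lc x (PSeries lc x)).
  { apply PSeries_correct. apply CV_radius_inside. rewrite CVlc. simpl; auto. }
  rewrite lc_eq in HP by auto.
  unfold is_pseries in HP.
  assert (HQ : is_series (fun n => lc n * x ^ n) (- ln (1 - x))).
  { eapply is_series_ext; [|exact HP]. intros n. simpl.
    rewrite pow_n_pow. change (x ^ n * lc n = lc n * x ^ n). ring. }
  apply is_series_ext with (fun k => lc (S k) * x ^ (S k)).
  { intros n. change (lc (S n) * x ^ (S n) = x ^ (S n) / INR (S n)). unfold lc. unfold Rdiv. ring. }
  apply (is_series_incr_1 (fun n => lc n * x ^ n)).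
  match goal with |- is_series _ ?l => replace l with (- ln (1 - x)) end.
  exact HQ. change (- ln (1 - x) = - ln (1 - x) + lc 0 * x ^ 0). simpl. ring.
Qed.
Lemma sub_even (w : nat -> R) (S0 : R) : is_series w S0 ->
  (forall k, w (2 * k + 1)%nat = 0) -> is_series (fun k => w (2 * k)%nat) S0.
Proof.
  intros H Hz. unfold is_series in *.
  assert (E : forall K, sum_n (fun k => w (2 * k)%nat) K = sum_n w (2 * K)).
  { induction K.
    - rewrite !sum_O. reflexivity.
    - rewrite sum_Sn, IHK. replace (2 * S K)%nat with (S (S (2 * K))) by lia.
      rewrite !sum_Sn. replace (S (2 * K)) with (2 * K + 1)%nat by lia. rewrite Hz.
      replace (S (2 * K + 1)) with (2 * S K)%nat by lia.
      change (sum_n w (2*K) + w (2 * S K)%nat = sum_n w (2*K) + 0 + w (2 * S K)%nat). ring. }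
  eapply filterlim_ext. intros K. symmetry. apply E.
  apply (filterlim_comp _ _ _ (fun K => 2 * K)%nat (sum_n w) eventually eventually).
  apply eventually_subseq. intros; lia. exact H.
Qed.

Lemma sub_odd (w : nat -> R) (S0 : R) : is_series w S0 ->
  (forall k, w (2 * k)%nat = 0) -> is_series (fun k => w (2 * k + 1)%nat) S0.
Proof.
  intros H Hz. unfold is_series in *.
  assert (E : forall K, sum_n (fun k => w (2 * k + 1)%nat) K = sum_n w (2 * K + 1)).
  { induction K.
    - rewrite sum_O. simpl. rewrite sum_Sn, sum_O. replace (w 0%nat) with 0 by (symmetry; apply (Hz 0%nat)).
      change (w 1%nat = 0 + w 1%nat). ring.
    - rewrite sum_Sn, IHK. replace (2 * S K + 1)%nat with (S (S (2 * K + 1))) by lia.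
      rewrite !sum_Sn. replace (S (2 * K + 1)) with (2 * S K)%nat by lia. rewrite Hz.
      replace (S (2 * S K)) with (2 * S K + 1)%nat by lia.
      change (sum_n w (2*K+1) + w (2 * S K + 1)%nat = sum_n w (2*K+1) + 0 + w (2 * S K+1)%nat). ring. }
  eapply filterlim_ext. intros K. symmetry. apply E.
  apply (filterlim_comp _ _ _ (fun K => 2 * K + 1)%nat (sum_n w) eventually eventually).
  apply eventually_subseq. intros; lia. exact H.
Qed.
Lemma ser_lin2 (a b : nat -> R) (la lb p q : R) : is_series a la -> is_series b lb ->
  is_series (fun n => p * a n + q * b n) (p * la + q * lb).
Proof.
  intros Ha Hb.
  exact (is_series_plus _ _ _ _ (is_series_scal p _ _ Ha) (is_series_scal q _ _ Hb)).
Qed.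

Lemma ser_lin3 (a b c : nat -> R) (la lb lc p q r : R) : is_series a la -> is_series b lb ->
  is_series c lc ->
  is_series (fun n => p * a n + q * b n + r * c n) (p * la + q * lb + r * lc).
Proof.
  intros Ha Hb Hc.
  exact (is_series_plus _ _ _ _ (ser_lin2 _ _ _ _ p q Ha Hb) (is_series_scal r _ _ Hc)).
Qed.

Lemma ser_ext (a b : nat -> R) (l1 l2 : R) : (forall n, a n = b n) -> l1 = l2 ->
  is_series a l1 -> is_series b l2.
Proof. intros H E Ha. rewrite <- E. exact (is_series_ext a b l1 H Ha). Qed.

Lemma ser_shift (a : nat -> R) (l : R) : is_series a l -> is_series (fun n => a (S n)) (l - a 0%nat).
Proof.
  intros H. apply is_series_incr_1.
  match goal with |- is_series _ ?m => replace m with l end. exact H.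
  change (l = l - a 0%nat + a 0%nat). ring.
Qed.

Lemma pow_opp_even (x : R) (n : nat) : (-x) ^ (2 * n) = x ^ (2 * n).
Proof. rewrite !pow_mult. f_equal. ring. Qed.

Lemma pow_opp_odd (x : R) (n : nat) : (-x) ^ (2 * n + 1) = - x ^ (2 * n + 1).
Proof. rewrite !pow_add, pow_opp_even. ring. Qed.

Definition At (x : R) := (ln (1 + x) - ln (1 - x)) / 2.
Definition Ev (x : R) := - (ln (1 - x) + ln (1 + x)) / 2.

Lemma SO (x : R) : Rabs x < 1 -> is_series (fun k => x ^ (2 * k + 1) / INR (2 * k + 1)) (At x).
Proof.
  intros Hx.
  pose proof (L1 x Hx) as Hu.
  assert (Hx' : Rabs (-x) < 1) by (rewrite Rabs_Ropp; auto).
  pose proof (L1 (-x) Hx') as Hv.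
  pose proof (ser_lin2 _ _ _ _ (1/2) (-1/2) Hu Hv) as Hw.
  apply sub_even in Hw.
  - eapply ser_ext; [| | exact Hw].
    + intros k. cbv beta. replace (S (2 * k)) with (2 * k + 1)%nat by lia. rewrite pow_opp_odd. field.
      apply not_0_INR. lia.
    + unfold At. replace (1 - - x) with (1 + x) by ring. field.
  - intros k. cbv beta. replace (S (2 * k + 1)) with (2 * S k)%nat by lia. rewrite pow_opp_even. field.
    apply not_0_INR. lia.
Qed.

Lemma SE (x : R) : Rabs x < 1 -> is_series (fun k => x ^ (2 * k + 2) / INR (2 * k + 2)) (Ev x).
Proof.
  intros Hx.
  pose proof (L1 x Hx) as Hu.
  assert (Hx' : Rabs (-x) < 1) by (rewrite Rabs_Ropp; auto).
  pose proof (L1 (-x) Hx') as Hv.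
  pose proof (ser_lin2 _ _ _ _ (1/2) (1/2) Hu Hv) as Hw.
  apply sub_odd in Hw.
  - eapply ser_ext; [| | exact Hw].
    + intros k. cbv beta. replace (S (2 * k + 1)) with (2 * S k)%nat by lia.
      replace (2 * k + 2)%nat with (2 * S k)%nat by lia. rewrite pow_opp_even. field.
      apply not_0_INR. lia.
    + unfold Ev. replace (1 - - x) with (1 + x) by ring. field.
  - intros k. cbv beta. replace (S (2 * k)) with (2 * k + 1)%nat by lia. rewrite pow_opp_odd. field.
    apply not_0_INR. lia.
Qed.

Definition gfun (x : R) := x / 2 * At x - Ev x + (At x - x) / (2 * x).

Lemma G (x : R) : Rabs x < 1 -> x <> 0 ->
  is_series (fun k => x ^ (2 * S k) / ((2 * INR (S k) - 1) * (2 * INR (S k)) * (2 * INR (S k) + 1)))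
    (gfun x).
Proof.
  intros Hx Hx0.
  pose proof (SO x Hx) as H1. pose proof (SE x Hx) as H2. pose proof (ser_shift _ _ (SO x Hx)) as H3.
  pose proof (ser_lin3 _ _ _ _ _ _ (x/2) (-1) (1/(2*x)) H1 H2 H3) as H.
  eapply ser_ext; [| | exact H].
  - intros k. cbv beta. rewrite !plus_INR, !mult_INR, !S_INR. simpl INR.
    replace (2 * S k + 1)%nat with (2 * k + 3)%nat by lia.
    replace (2 * S k)%nat with (2 * k + 2)%nat by lia.
    rewrite !pow_add. simpl (x ^ 1). simpl (x^2). simpl (x^3).
    assert (0 <= INR k) by apply pos_INR.
    field. repeat split; try lra.
  - unfold gfun. simpl. field. auto.
Qed.

Lemma ln_prod (x y : R) : 0 < x -> 0 < y -> ln (x * y) = ln x + ln y.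
Proof. apply ln_mult. Qed.
Lemma ln_quot (x y : R) : 0 < x -> 0 < y -> ln (x / y) = ln x - ln y.
Proof. intros. unfold Rdiv. rewrite ln_mult, ln_Rinv; try lra. apply Rinv_0_lt_compat; lra. Qed.

Section Logs.
Variables a b : R.
Hypotheses (ha : 0 < a) (hb : 0 < b) (hab : a * b = 1).

Let L := a + b.
Lemma hL : 0 < L. Proof. unfold L; lra. Qed.
Lemma lb : ln b = - ln a.
Proof. replace b with (/ a). apply ln_Rinv; auto. field_simplify_eq; lra. Qed.

Lemma e1 : ln (1 + a / L) = ln (L + a) - ln L.
Proof. pose proof hL. replace (1 + a / L) with ((L + a) / L) by (field; lra). apply ln_quot; lra. Qed.
Lemma e2 : ln (1 - a / L) = - ln a - ln L.
Proof. pose proof hL. replace (1 - a / L) with (b / L) by (unfold L; field; lra). rewrite ln_quot, lb; lra. Qed.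
Lemma e3 : ln (1 + b / L) = ln (L + b) - ln L.
Proof. pose proof hL. replace (1 + b / L) with ((L + b) / L) by (field; lra). apply ln_quot; lra. Qed.
Lemma e4 : ln (1 - b / L) = ln a - ln L.
Proof. pose proof hL. replace (1 - b / L) with (a / L) by (unfold L; field; lra). rewrite ln_quot; lra. Qed.
Lemma eA : ln ((b * L + 1) / (a * L + 1)) = (- ln a + ln (L + a)) - (ln a + ln (L + b)).
Proof.
  pose proof hL.
  replace (b * L + 1) with (b * (L + a)) by (unfold L; nra).
  replace (a * L + 1) with (a * (L + b)) by (unfold L; nra).
  rewrite ln_quot, !ln_mult, lb; nra.
Qed.
Lemma eD : ln (2 * L ^ 2 + 1) = ln (L + a) + ln (L + b).
Proof.
  pose proof hL. replace (2 * L ^ 2 + 1) with ((L + a) * (L + b)) by (unfold L; nra).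
  rewrite ln_mult; lra.
Qed.
Lemma eB : ln ((2 * L ^ 2 + 1) / L ^ 4) = ln (L + a) + ln (L + b) - 4 * ln L.
Proof.
  pose proof hL. rewrite ln_quot, eD, ln_pow. simpl INR. ring. lra. nra. apply pow_lt; lra.
Qed.
Lemma eC : ln ((L + a) / (L + b) * a ^ 2) = ln (L + a) - ln (L + b) + 2 * ln a.
Proof.
  pose proof hL. rewrite ln_mult, ln_quot, ln_pow. simpl INR. ring. all: try lra.
  apply Rdiv_lt_0_compat; lra. nra.
Qed.

Lemma abs_idL (p q sq : R) : sq <> 0 ->
  p * gfun (a / L) + q * gfun (b / L) =
    1/4 * ((p - q) / sq) * sq * ln ((b * L + 1) / (a * L + 1)) + 1/4 * (p + q) * ln ((2 * L ^ 2 + 1) / L ^ 4) - (p + q) / 2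
     + 1/8 * L ^ 2 * ((p - q) / sq) * sq * ln ((L + a) / (L + b) * a ^ 2) + 1/8 * L ^ 2 * (p + q) * ln (2 * L ^ 2 + 1)
     - (L ^ 2 - 1) / (8 * L) * ((a * p - b * q) / sq) * sq * ln ((L + a) / (L + b) * a ^ 2)
     - (L ^ 2 - 1) / (8 * L) * (a * p + b * q) * ln (2 * L ^ 2 + 1).
Proof.
  intros hsq. pose proof hL.
  rewrite eA, eB, eC, eD. unfold gfun, At, Ev. rewrite e1, e2, e3, e4.
  assert (hb' : b = / a) by (field_simplify_eq; lra).
  unfold L in *. rewrite hb' in *.
  field. repeat split; try lra; nra.
Qed.

Lemma abs_idF (p q sq : R) : sq <> 0 ->
  (p * gfun (a / L) - q * gfun (b / L)) / sq =
    1/4 * ((p + q) / sq) * ln ((b * L + 1) / (a * L + 1)) + 1/4 * ((p - q) / sq) * ln ((2 * L ^ 2 + 1) / L ^ 4) - ((p - q) / sq) / 2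
     + 1/8 * L ^ 2 * ((p + q) / sq) * ln ((L + a) / (L + b) * a ^ 2) + 1/8 * L ^ 2 * ((p - q) / sq) * ln (2 * L ^ 2 + 1)
     - (L ^ 2 - 1) / (8 * L) * ((a * p + b * q) / sq) * ln ((L + a) / (L + b) * a ^ 2)
     - (L ^ 2 - 1) / (8 * L) * ((a * p - b * q) / sq) * ln (2 * L ^ 2 + 1).
Proof.
  intros hsq. pose proof hL.
  rewrite eA, eB, eC, eD. unfold gfun, At, Ev. rewrite e1, e2, e3, e4.
  assert (hb' : b = / a) by (field_simplify_eq; lra).
  unfold L in *. rewrite hb' in *.
  field. repeat split; try lra; nra.
Qed.

Lemma pow_quot (x y : R) (n : nat) : y <> 0 -> (x / y) ^ n = x ^ n / y ^ n.
Proof. intros. unfold Rdiv. rewrite Rpow_mult_distr, pow_inv. reflexivity. Qed.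

Lemma abs_ser (p q : R) :
  is_series (fun k => (p * a ^ (2 * S k) + q * b ^ (2 * S k)) /
     (L ^ (2 * S k) * ((2 * INR (S k) - 1) * (2 * INR (S k)) * (2 * INR (S k) + 1))))
   (p * gfun (a / L) + q * gfun (b / L)).
Proof.
  pose proof hL.
  assert (h1 : Rabs (a / L) < 1).
  { rewrite Rabs_pos_eq. apply (Rmult_lt_reg_r L); [lra|]; unfold Rdiv; rewrite Rmult_assoc, Rinv_l, Rmult_1_r by lra; unfold L; lra. apply Rlt_le, Rdiv_lt_0_compat; lra. }
  assert (h2 : Rabs (b / L) < 1).
  { rewrite Rabs_pos_eq. apply (Rmult_lt_reg_r L); [lra|]; unfold Rdiv; rewrite Rmult_assoc, Rinv_l, Rmult_1_r by lra; unfold L; lra. apply Rlt_le, Rdiv_lt_0_compat; lra. }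
  assert (n1 : a / L <> 0) by (apply Rgt_not_eq, Rdiv_lt_0_compat; lra).
  assert (n2 : b / L <> 0) by (apply Rgt_not_eq, Rdiv_lt_0_compat; lra).
  pose proof (ser_lin2 _ _ _ _ p q (G _ h1 n1) (G _ h2 n2)) as H0.
  eapply ser_ext; [| | exact H0]; [|reflexivity].
  intros k. cbv beta. rewrite !pow_quot by lra.
  assert (0 <= INR k) by apply pos_INR. rewrite S_INR.
  assert (L ^ (2 * S k) <> 0) by (apply pow_nonzero; lra).
  field. repeat split; try lra.
Qed.
End Logs.

Lemma pZ (x : R) (z : Z) (n : nat) : x <> 0 -> powerRZ x (z * Z.of_nat n) = (powerRZ x z) ^ n.
Proof.
  intros hx. induction n.
  - simpl. rewrite Z.mul_0_r. reflexivity.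
  - rewrite Nat2Z.inj_succ, Z.mul_succ_r, powerRZ_add, IHn by auto. simpl. ring.
Qed.

Lemma powsplit (x : R) (r s : Z) (k : nat) : x <> 0 ->
  powerRZ x (2 * r * Z.of_nat k + s) = powerRZ x s * (powerRZ x r) ^ (2 * k).
Proof.
  intros hx. rewrite powerRZ_add by auto.
  replace (2 * r * Z.of_nat k)%Z with (r * Z.of_nat (2 * k))%Z by (rewrite Nat2Z.inj_mul; lia).
  rewrite pZ by auto. ring.
Qed.

Lemma alpha_pos : 0 < alpha.
Proof. unfold alpha. pose proof (sqrt_pos 5). lra. Qed.
Lemma s5_pos : 0 < sqrt 5.
Proof. apply sqrt_lt_R0. lra. Qed.
Lemma beta_nz : beta <> 0.
Proof.
  unfold beta. intros H. assert (sqrt 5 = 1) by lra.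
  pose proof (sqrt_sqrt 5). rewrite H0 in H1. lra.
Qed.
Lemma amb : alpha - beta = sqrt 5.
Proof. unfold alpha, beta. field. Qed.
Lemma atb : alpha * beta = -1.
Proof. unfold alpha, beta. pose proof (sqrt_sqrt 5 ltac:(lra)). nra. Qed.

Theorem theorem12 (r s : Z) (hr : Z.Even r) :
  let Lr := Luc r in
  let A := ln ((powerRZ beta r * Lr + 1) / (powerRZ alpha r * Lr + 1)) in
  let B := ln ((2 * Lr ^ 2 + 1) / Lr ^ 4) in
  let C := ln ((Lr + powerRZ alpha r) / (Lr + powerRZ beta r) * powerRZ alpha (2 * r)) in
  let D := ln (2 * Lr ^ 2 + 1) in
  let den (k : nat) := Lr ^ (2 * k) * (2 * INR k - 1) * (2 * INR k) * (2 * INR k + 1) in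
  infinite_sum
    (fun k : nat => Luc (2 * r * Z.of_nat (S k) + s) / den (S k))
    (1/4 * Fib s * sqrt 5 * A + 1/4 * Luc s * B - Luc s / 2
     + 1/8 * Lr ^ 2 * Fib s * sqrt 5 * C + 1/8 * Lr ^ 2 * Luc s * D
     - (Lr ^ 2 - 1) / (8 * Lr) * Fib (r + s) * sqrt 5 * C
     - (Lr ^ 2 - 1) / (8 * Lr) * Luc (r + s) * D)
  /\
  infinite_sum
    (fun k : nat => Fib (2 * r * Z.of_nat (S k) + s) / den (S k))
    (1/4 * (Luc s / sqrt 5) * A + 1/4 * Fib s * B - Fib s / 2
     + 1/8 * Lr ^ 2 * (Luc s / sqrt 5) * C + 1/8 * Lr ^ 2 * Fib s * D
     - (Lr ^ 2 - 1) / (8 * Lr) * (Luc (r + s) / sqrt 5) * C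
     - (Lr ^ 2 - 1) / (8 * Lr) * Fib (r + s) * D).
Proof.
  cbv zeta. destruct hr as [m hm].
  pose proof alpha_pos as hap. pose proof s5_pos as h5. pose proof beta_nz as hbn.
  assert (han : alpha <> 0) by lra.
  assert (ha : 0 < powerRZ alpha r) by (apply powerRZ_lt; lra).
  assert (hb : 0 < powerRZ beta r).
  { replace r with (m * Z.of_nat 2)%Z by (change (Z.of_nat 2) with 2%Z; lia). rewrite pZ by auto.
    pose proof (powerRZ_NOR beta m hbn). simpl. nra. }
  assert (hab : powerRZ alpha r * powerRZ beta r = 1).
  { rewrite <- powerRZ_mult, atb. replace r with (m * Z.of_nat 2)%Z by (change (Z.of_nat 2) with 2%Z; lia).
    rewrite pZ by lra. simpl. rewrite Rmult_1_r, <- powerRZ_mult.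
    replace (-1 * -1) with 1 by ring. apply powerRZ_R1. }
  assert (h2r : powerRZ alpha (2 * r) = (powerRZ alpha r) ^ 2).
  { replace (2 * r)%Z with (r * Z.of_nat 2)%Z by (change (Z.of_nat 2) with 2%Z; lia). apply pZ; auto. }
  rewrite h2r.
  unfold Fib, Luc. rewrite amb.
  rewrite !(powerRZ_add _ r s) by auto.
  set (a := powerRZ alpha r) in *. set (b := powerRZ beta r) in *.
  set (p := powerRZ alpha s). set (q := powerRZ beta s).
  split; apply is_series_Reals.
  - eapply ser_ext; [| | apply (abs_ser a b ha hb p q)].
    + intros k. cbv beta. rewrite !powsplit by auto. fold a b p q.
      assert (0 <= INR k) by apply pos_INR. rewrite S_INR.
      assert ((a + b) ^ (2 * S k) <> 0) by (apply pow_nonzero; lra).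
      field. repeat split; lra.
    + rewrite (abs_idL a b ha hb hab p q (sqrt 5)) by lra.
      field. lra.
  - eapply ser_ext; [| | apply (abs_ser a b ha hb (p / sqrt 5) (- q / sqrt 5))].
    + intros k. cbv beta. rewrite !powsplit by auto. fold a b p q.
      assert (0 <= INR k) by apply pos_INR. rewrite S_INR.
      assert ((a + b) ^ (2 * S k) <> 0) by (apply pow_nonzero; lra).
      field. repeat split; lra.
    + replace (p / sqrt 5 * gfun (a / (a + b)) + - q / sqrt 5 * gfun (b / (a + b)))
        with ((p * gfun (a / (a + b)) - q * gfun (b / (a + b))) / sqrt 5) by (field; lra).
      rewrite (abs_idF a b ha hb hab p q (sqrt 5)) by lra.
      field. lra.
Qed.
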